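(* Let $G=\{1,\dots,d\}^2$ and run the following randomized procedure. Initialize $S=\emptyset$, $B=\emptyset$, $\mathsf{Flag}=x$. Sample $g\in G$ uniformly at random and set $B=\{g\}$, $S=\{g\}$. Then, while $S\ne G$, sample $g=(g_x,g_y)\in G$ uniformly at random (independently) and: if $\mathsf{Flag}=x$, $g_x\in S_x$ and $g\notin S$, set $B=B\cup\{g\}$, $S=S\cup(S_x\times\{g_y\})$, $\mathsf{Flag}=y$; if $\mathsf{Flag}=y$, $g_y\in S_y$ and $g\notin S$, set $B=B\cup\{g\}$, $S=S\cup(\{g_x\}\times S_y)$, $\mathsf{Flag}=x$; otherwise do nothing. Here $S_x$ (resp. $S_y$) is the set of first (resp. second) coordinates appearing in $S$. Then for $c>0$: if the number of sampled groups is greater than $8cd\log d$, then $G\subseteq\mathsf{DAff}(B)$ with probability greater than or equal to $1-\frac1c$.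
   Context: For $z=(z_1,z_2)\in G$, $\sigma(z)\in\{0,1\}^{2d}$ is the concatenation of the one-hot encodings of $z_1$ and $z_2$. For a finite $\mathcal{A}=\{z^{(1)},\dots,z^{(k)}\}\subseteq G$, $\mathsf{DAff}(\mathcal{A})=\{z\in G:\exists\alpha\in\mathbb{R}^k,\ \sum_i\alpha_i=1,\ \sigma(z)=\sum_i\alpha_i\sigma(z^{(i)})\}$. *)

(* Defs.v *)
From HB Require Import structures.
From mathcomp Require Import all_boot all_order all_algebra.
From mathcomp Require Import boolp reals exp.
Set Implicit Arguments. Unset Strict Implicit. Unset Printing Implicit Defensive.
Import Order.TTheory GRing.Theory Num.Theory.
Local Open Scope ring_scope.

(* The grid G = {1..d}^2, represented as 'I_d * 'I_d. *)
Definition grid (d : nat) : finType := ('I_d * 'I_d)%type.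

(* sigma(z) in {0,1}^{2d}: concatenation of the one-hot encodings of z1, z2;
   coordinates indexed by 'I_d + 'I_d (inl = first block, inr = second). *)
Definition sigma (R : nzRingType) (d : nat) (z : grid d) : 'I_d + 'I_d -> R :=
  fun j => match j with
           | inl i => (z.1 == i)%:R
           | inr i => (z.2 == i)%:R
           end.

Definition DAff (R : nzRingType) (d : nat) (A : {set grid d}) : grid d -> Prop :=
  fun z => exists alpha : grid d -> R,
      \sum_(a in A) alpha a = 1 /\
      forall j, sigma R z j = \sum_(a in A) alpha a * sigma R a j.

(* State of the procedure: (S, B, Flag) with Flag = true meaning "x". *)
Definition state (d : nat) := ({set grid d} * {set grid d} * bool)%type.

Definition Sx d (S : {set grid d}) : {set 'I_d} := [set p.1 | p in S].
Definition Sy d (S : {set grid d}) : {set 'I_d} := [set p.2 | p in S].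

Definition init_state d (g : grid d) : state d := ([set g], [set g], true).

(* One iteration of the while loop on sample g; once S = G the loop has
   terminated and further samples change nothing. *)
Definition step d (st : state d) (g : grid d) : state d :=
  let: (Sc, Bc, fx) := st in
  if Sc == [set: grid d] then st else
  if fx then
    (if (g.1 \in Sx Sc) && (g \notin Sc)
     then (Sc :|: setX (Sx Sc) [set g.2], g |: Bc, false) else st)
  else
    (if (g.2 \in Sy Sc) && (g \notin Sc)
     then (Sc :|: setX [set g.1] (Sy Sc), g |: Bc, true) else st).

Definition run d (s : seq (grid d)) : state d :=
  match s with
  | [::] => (set0, set0, true)
  | g :: s' => foldl (@step d) (init_state g) s'
  end.

Definition final_B d N (w : {ffun 'I_N -> grid d}) : {set grid d} :=
  (run [seq w i | i <- enum 'I_N]).1.2.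

(* Probability, under N independent uniform samples from G, of event E. *)
Definition unif_prob (R : realType) d N (E : {ffun 'I_N -> grid d} -> Prop) : R :=
  (#|[set w : {ffun 'I_N -> grid d} | `[< E w >] ]|)%:R
  / (#|{: {ffun 'I_N -> grid d}}|)%:R.

(* Main.v *)
Require Import Defs.
From HB Require Import structures.
From mathcomp Require Import all_boot all_order all_algebra.
From mathcomp Require Import boolp reals exp.
From mathcomp Require Import ring lra.
Import Order.TTheory GRing.Theory Num.Theory.
Local Open Scope ring_scope.
Set Implicit Arguments. Unset Strict Implicit. Unset Printing Implicit Defensive.

Section Det.
Variable (R : realType) (d : nat).
Local Notation T := (grid d).

Lemma DAff_mem (B : {set T}) z : z \in B -> DAff R B z.
Proof.
move=> zB; exists (fun a => (a == z)%:R); split.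
  by rewrite (bigD1 z) //= eqxx big1 ?addr0 // => a /andP[_ /negbTE ->].
move=> j; rewrite (bigD1 z) //= eqxx mul1r big1 ?addr0 //.
by move=> a /andP[_ /negbTE ->]; rewrite mul0r.
Qed.

Lemma DAff_mono (B B' : {set T}) z : B \subset B' -> DAff R B z -> DAff R B' z.
Proof.
move=> sBB' [al [h1 h2]].
exists (fun a => if a \in B then al a else 0); split.
  rewrite -h1 (big_setID B) /= (setIidPr sBB') [X in _ + X]big1 ?addr0.
    by apply: eq_bigr => a ->.
  by move=> a; rewrite !inE => /andP[/negbTE -> _].
move=> j; rewrite h2 [RHS](big_setID B) /= (setIidPr sBB') [X in _ + X]big1 ?addr0.
  by apply: eq_bigr => a ->.
by move=> a; rewrite !inE => /andP[/negbTE -> _]; rewrite mul0r.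
Qed.

Lemma DAff_comb (B : {set T}) (z z1 z2 z3 : T) :
  DAff R B z1 -> DAff R B z2 -> DAff R B z3 ->
  z1.1 = z3.1 -> z2.1 = z.1 -> z.2 = z1.2 -> z3.2 = z2.2 -> DAff R B z.
Proof.
move=> [a1 [s1 h1]] [a2 [s2 h2]] [a3 [s3 h3]] e1 e2 e3 e4.
exists (fun a => a1 a + a2 a - a3 a); split.
  by rewrite sumrB big_split /= s1 s2 s3 addrK.
move=> j.
have -> : \sum_(a in B) (a1 a + a2 a - a3 a) * sigma R a j =
   \sum_(a in B) a1 a * sigma R a j + \sum_(a in B) a2 a * sigma R a j
   - \sum_(a in B) a3 a * sigma R a j.
  rewrite -big_split -sumrB; apply: eq_bigr => a _; rewrite /= mulrBl mulrDl. done.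
rewrite -h1 -h2 -h3; case: j => i /=.
  by rewrite e1 e2; ring.
by rewrite e3 e4; ring.
Qed.

Definition Sx' := @Sx d.
Lemma SxX (A Y : {set 'I_d}) : Y != set0 -> Sx (setX A Y) = A.
Proof.
case/set0Pn => y yY; apply/setP => x; apply/imsetP/idP.
  by case=> [[a b]]; rewrite in_setX => /andP[h _] ->.
by move=> xA; exists (x, y) => //; rewrite in_setX xA.
Qed.

Lemma SyX (A Y : {set 'I_d}) : A != set0 -> Sy (setX A Y) = Y.
Proof.
case/set0Pn => x xA; apply/setP => y; apply/imsetP/idP.
  by case=> [[a b]]; rewrite in_setX => /andP[_ h] ->.
by move=> yY; exists (x, y) => //; rewrite in_setX xA.
Qed.

Lemma inX (A Y : {set 'I_d}) (z : T) :
  (z \in setX A Y) = (z.1 \in A) && (z.2 \in Y).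
Proof. by case: z => a b; rewrite in_setX. Qed.

Definition Inv (st : state d) : Prop :=
  let: (Sc, B, f) := st in
  exists A Y : {set 'I_d},
    [/\ Sc = setX A Y, (0 < #|A|)%N, #|Y| = (#|A| + ~~ f)%N &
        forall z, z \in Sc -> DAff R B z].

Lemma Inv_init g : Inv (init_state g).
Proof.
exists [set g.1], [set g.2]; split; rewrite ?cards1 //.
  by case: g => a b; apply/setP => [[x y]]; rewrite in_setX !inE xpair_eqE.
by move=> z; rewrite inE => /eqP ->; apply: DAff_mem; rewrite inE.
Qed.

Lemma ne0_card (A : {set 'I_d}) : (0 < #|A|)%N -> A != set0.
Proof. by rewrite card_gt0. Qed.

Lemma Inv_step st g : Inv st -> Inv (step st g).
Proof.
case: st => [[Sc B] f] [A [Y [hS hA hY hD]]].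
have A0 : A != set0 by rewrite -card_gt0.
have Y0 : Y != set0 by rewrite -card_gt0 hY; case: (#|A|) hA.
rewrite /step; case: ifP => [_|_]; first by exists A, Y.
rewrite hS SxX // SyX //.
case: f hY => hY.
  case: ifP => [/andP[g1A gS]|_]; last by exists A, Y; rewrite -hS.
  have g2Y : g.2 \notin Y by move: gS; rewrite inX g1A.
  exists A, (g.2 |: Y); split => //.
  - by apply/setP => z; rewrite !(inX, inE); case: (z.1 \in A); 
      rewrite ?orbF ?orbT // orbC.
  - by rewrite cardsU1 g2Y hY addn0 addn1.
  have hB : B \subset g |: B by apply/subsetP => z zB; rewrite !inE zB orbT.
  move=> z; rewrite !inE => /orP[/andP[z1 z2]|/andP[z1 /eqP z2]].
    by apply: (DAff_mono hB); apply: hD; rewrite hS inX z1 z2.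
  case/set0Pn: Y0 => b bY.
  apply: (@DAff_comb _ z g (z.1, b) (g.1, b)) => //.
  - by apply: DAff_mem; rewrite !inE eqxx.
  - by apply: (DAff_mono hB); apply: hD; rewrite hS inX z1 bY.
  - by apply: (DAff_mono hB); apply: hD; rewrite hS inX g1A bY.
case: ifP => [/andP[g2Y gS]|_]; last by exists A, Y; rewrite -hS.
have g1A : g.1 \notin A by move: gS; rewrite inX g2Y andbT.
exists (g.1 |: A), Y; split => //.
- by apply/setP => z; rewrite !(inX, inE); case: (z.2 \in Y);
    rewrite ?andbF ?andbT ?orbF // orbC.
- by rewrite cardsU1 g1A.
- by rewrite cardsU1 g1A hY /= addn0 add1n addn1.
have hB : B \subset g |: B by apply/subsetP => z zB; rewrite !inE zB orbT.
move=> z; rewrite !inE => /orP[/andP[z1 z2]|/andP[/eqP z1 z2]].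
  by apply: (DAff_mono hB); apply: hD; rewrite hS inX z1 z2.
case/set0Pn: A0 => a aA.
apply: (@DAff_comb _ z (a, z.2) g (a, g.2)) => //.
- by apply: (DAff_mono hB); apply: hD; rewrite hS inX aA z2.
- by apply: DAff_mem; rewrite !inE eqxx.
- by apply: (DAff_mono hB); apply: hD; rewrite hS inX aA g2Y.
Qed.

Lemma Inv_foldl st s : Inv st -> Inv (foldl (@step d) st s).
Proof. by elim: s st => //= g s IH st h; apply: IH; apply: Inv_step. Qed.

End Det.

Section Prob.
Variable (R : realType) (d : nat).
Hypothesis d_gt0 : (0 < d)%N.
Local Notation T := (grid d).
Local Notation m := (#|T|%:R : R).
Implicit Types (st : state d) (g : T).

Lemma cardT : #|T| = (d * d)%N.
Proof. by rewrite card_prod card_ord. Qed.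

Lemma m_gt0 : 0 < m.
Proof. by rewrite cardT ltr0n muln_gt0 d_gt0. Qed.

Lemma m_neq0 : m != 0.
Proof. by rewrite gt_eqF // m_gt0. Qed.

Definition nt (st : state d) : R := (st.1.1 != [set: T])%:R.

Fixpoint Q n (st : state d) : R :=
  if n is n'.+1 then (\sum_(g : T) Q n' (@step d st g)) / m else nt st.

Lemma QS n st : Q n.+1 st = (\sum_g Q n (step st g)) / m.
Proof. by []. Qed.

Lemma step_term st g : st.1.1 = setT -> step st g = st.
Proof. by case: st => [[Sc B] f] /= ->; rewrite /step eqxx. Qed.

Lemma Q_term n st : st.1.1 = setT -> Q n st = 0.
Proof.
elim: n st => [|n IH] st h; first by rewrite /= /nt h eqxx.
by rewrite QS big1 ?mul0r // => g _; rewrite step_term // IH.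
Qed.

Lemma avg_le (a b : T -> R) : (forall g, a g <= b g) ->
  (\sum_g a g) / m <= (\sum_g b g) / m.
Proof.
move=> h; apply: ler_wpM2r; first by rewrite invr_ge0 ltW // m_gt0.
by apply: ler_sum => g _; apply: h.
Qed.

Lemma Q_mono n st : Q n.+1 st <= Q n st.
Proof.
elim: n st => [|n IH] st.
  case: (boolP (st.1.1 == setT)) => [/eqP h|h]; first by rewrite !Q_term.
  rewrite QS {2}/Q /nt h /=.
  apply: (le_trans (avg_le (b := fun _ => 1) _)).
    by move=> g; rewrite /nt; case: (_ != _).
  by rewrite sumr_const divff // m_neq0.
by rewrite QS [X in _ <= X]QS; apply: avg_le => g; apply: IH.
Qed.

Lemma Q_anti k n st : (k <= n)%N -> Q n st <= Q k st.
Proof.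
elim: n => [|n IH]; first by rewrite leqn0 => /eqP ->.
rewrite leq_eqVlt => /orP[/eqP ->//|]; rewrite ltnS => /IH.
exact: le_trans (Q_mono _ _).
Qed.

Definition wx k : R := (d * d)%:R / (k * (d - k))%:R.
Definition wy k : R := (d * d)%:R / (k.+1 * (d - k))%:R.
Definition F k : R := \sum_(k <= l < d) (wx l + wy l).

Definition pot (st : state d) : R :=
  let: (Sc, _, f) := st in
  if f then F #|Sx Sc| else F #|Sx Sc| - wx #|Sx Sc|.

Lemma wx_ge0 k : 0 <= wx k. Proof. by rewrite /wx divr_ge0. Qed.
Lemma wy_ge0 k : 0 <= wy k. Proof. by rewrite /wy divr_ge0. Qed.
Lemma F_ge0 k : 0 <= F k.
Proof. by rewrite /F sumr_ge0 // => l _; rewrite addr_ge0 ?wx_ge0 ?wy_ge0. Qed.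

Lemma F_rec k : (k < d)%N -> F k = wx k + wy k + F k.+1.
Proof. by move=> h; rewrite /F big_ltn. Qed.

Lemma setXU1r (A Y : {set 'I_d}) y :
  setX A Y :|: setX A [set y] = setX A (y |: Y).
Proof.
apply/setP => z; rewrite !inE.
by case: (z.1 \in A) => //=; rewrite orbC.
Qed.

Lemma setXU1l (A Y : {set 'I_d}) x :
  setX A Y :|: setX [set x] Y = setX (x |: A) Y.
Proof.
apply/setP => z; rewrite !inE.
by case: (z.2 \in Y); rewrite ?andbT ?andbF // orbC.
Qed.

Lemma sum_ind (I : finType) (C : {set I}) :
  \sum_(g : I) ((g \in C)%:R : R) = #|C|%:R.
Proof.
rewrite -sum1_card natr_sum [RHS]big_mkcond /=.
by apply: eq_bigr => g _; case: (g \in C).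
Qed.

Lemma cardC' (Y : {set 'I_d}) : #|~: Y| = (d - #|Y|)%N.
Proof.
apply/eqP; rewrite -(eqn_add2l #|Y|) cardsC card_ord subnKC //.
by rewrite -[X in (_ <= X)%N](card_ord d) max_card.
Qed.

Lemma setT_card (A : {set 'I_d}) : #|A| = d -> A = setT.
Proof. by move=> h; apply/eqP; rewrite eqEcard subsetT /= cardsT card_ord h. Qed.

Lemma card_le_d (A : {set 'I_d}) : (#|A| <= d)%N.
Proof. by rewrite -[X in (_ <= X)%N](card_ord d) max_card. Qed.

Lemma pot_ge0 st : Inv R st -> 0 <= pot st.
Proof.
case: st => [[Sc B] f] [A [Y [-> hA hY _]]].
have Y0 : Y != set0 by rewrite -card_gt0 hY; case: (#|A|) hA.
rewrite /pot SxX //; case: f hY => hY; first exact: F_ge0.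
have hk : (#|A| < d)%N by rewrite -addn1 -hY card_le_d.
rewrite F_rec //.
have -> : wx #|A| + wy #|A| + F #|A|.+1 - wx #|A| = wy #|A| + F #|A|.+1 by ring.
by rewrite addr_ge0 ?wy_ge0 ?F_ge0.
Qed.

Lemma pot_step st : Inv R st -> st.1.1 != setT ->
  \sum_g pot (step st g) = m * pot st - m.
Proof.
case: st => [[Sc B] f] [A [Y [-> hA hY _]]] /= hT.
have A0 : A != set0 by rewrite -card_gt0.
have Y0 : Y != set0 by rewrite -card_gt0 hY; case: (#|A|) hA.
set k := #|A|.
have mE : m = (d * d)%:R by rewrite cardT.
rewrite /step /= (negbTE hT) (SxX A Y0) SyX //.
case: f hY => hY.
  have hk : (k < d)%N.
    rewrite ltn_neqAle card_le_d andbT; apply: contra hT => /eqP hkd.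
    rewrite (setT_card hkd) (setT_card (etrans hY (etrans (addn0 _) hkd))).
    by apply/eqP/setP => z; rewrite inX !inE.
  have e : forall g, pot (if (g.1 \in A) && (g \notin setX A Y)
      then (setX A Y :|: setX A [set g.2], g |: B, false)
      else (setX A Y, B, true)) =
      F k - ((g \in setX A (~: Y))%:R) * wx k.
    move=> g; rewrite inX inX inE; case: (boolP (g.1 \in A)) => g1 /=.
      case: (boolP (g.2 \in Y)) => g2 /=.
        by rewrite /pot SxX // mul0r subr0.
      by rewrite /pot setXU1r SxX ?mul1r //; apply/set0Pn; exists g.2; rewrite !inE eqxx.
    by rewrite /pot SxX // mul0r subr0.
  rewrite (eq_bigr _ (fun g _ => e g)) sumrB sumr_const -mulr_suml sum_ind.
  rewrite cardsX cardC' hY addn0 /pot /= -/k.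
  have -> : (k * (d - k))%:R * wx k = (d * d)%:R.
    rewrite /wx mulrC divfK // pnatr_eq0 muln_eq0 negb_or -lt0n hA /=.
    by rewrite -lt0n subn_gt0.
  by rewrite -mE -[F k *+ _]mulr_natl.
have hk : (k < d)%N by rewrite -addn1 -hY card_le_d.
have e : forall g, pot (if (g.2 \in Y) && (g \notin setX A Y)
    then (setX A Y :|: setX [set g.1] Y, g |: B, true)
    else (setX A Y, B, false)) =
    (F k - wx k) - ((g \in setX (~: A) Y)%:R) * wy k.
  move=> g; rewrite inX inX inE; case: (boolP (g.2 \in Y)) => g2 /=;
    rewrite ?andbT ?andbF /=.
    case: (boolP (g.1 \in A)) => g1 /=.
      by rewrite /pot SxX // mul0r subr0.
    rewrite /pot setXU1l SxX // cardsU1 g1 mul1r add1n (F_rec hk).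
    by rewrite -/k; ring.
  by rewrite /pot SxX // mul0r subr0.
rewrite (eq_bigr _ (fun g _ => e g)) sumrB sumr_const -mulr_suml sum_ind.
rewrite cardsX cardC' /pot /= -/k.
have -> : ((d - k) * #|Y|)%:R * wy k = (d * d)%:R.
  rewrite hY addn1 /wy mulnC mulrC divfK // pnatr_eq0 muln_eq0 negb_or /=.
  by rewrite -lt0n subn_gt0.
by rewrite -mE -[_ *+ #|_|]mulr_natl.
Qed.

Lemma Q_pot n st : Inv R st -> \sum_(k < n) Q k st <= pot st.
Proof.
elim: n st => [|n IH] st hI; first by rewrite big_ord0 pot_ge0.
case: (boolP (st.1.1 == setT)) => [/eqP h|h].
  by rewrite big1 ?pot_ge0 // => k _; apply: Q_term.
rewrite big_ord_recl.
have -> : \sum_(i < n) Q (lift ord0 i) st =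
          (\sum_g \sum_(i < n) Q i (step st g)) / m.
  rewrite exchange_big mulr_suml; apply: eq_bigr => i _.
  by rewrite lift0 QS.
have : (\sum_g \sum_(i < n) Q i (step st g)) / m <= (\sum_g pot (step st g)) / m.
  by apply: avg_le => g; apply: IH; apply: Inv_step.
rewrite pot_step // => hle.
have e : (m * pot st - m) / m = pot st - 1.
  by rewrite mulrBl mulrAC divff ?mul1r ?m_neq0.
rewrite e in hle.
rewrite /= /nt h /=.
apply: le_trans (lerD (lexx _) hle) _.
by rewrite addrC subrK.
Qed.

Lemma Q_markov n st : Inv R st -> n.+1%:R * Q n st <= pot st.
Proof.
move=> hI; apply: le_trans (Q_pot n.+1 hI).
have -> : n.+1%:R * Q n st = \sum_(k < n.+1) Q n st.
  by rewrite sumr_const card_ord mulr_natl.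
by apply: ler_sum => k _; apply: Q_anti; rewrite -ltnS.
Qed.

End Prob.

Section Bound.
Variable (R : realType) (d : nat).
Hypothesis d_gt0 : (0 < d)%N.

Lemma ln_le_sub1 (y : R) : 0 < y -> ln y <= y - 1.
Proof.
move=> y0; have := expR_ge1Dx (ln y); rewrite lnK ?posrE // => h.
by rewrite lerBrDl.
Qed.

Lemma inv_le_ln (l : nat) : (0 < l)%N ->
  (l%:R : R)^-1 <= 2 * (ln l.+1%:R - ln l%:R).
Proof.
move=> l0; rewrite -[l.+1%:R]natr1; set a : R := l%:R.
have a1 : 1 <= a by rewrite /a ler1n.
have a0 : 0 < a by apply: lt_le_trans a1.
have a10 : 0 < a + 1 by rewrite addr_gt0.
have h1 : ln (a / (a + 1)) <= a / (a + 1) - 1.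
  by apply: ln_le_sub1; rewrite divr_gt0.
rewrite ln_div ?posrE // in h1.
have e1 : a / (a + 1) - 1 = - (a + 1)^-1.
  by field; rewrite gt_eqF.
rewrite e1 in h1.
have h2 : 0 <= 2 * (a + 1)^-1 - a^-1.
  have -> : 2 * (a + 1)^-1 - a^-1 = (a - 1) / (a * (a + 1)).
    by field; rewrite !gt_eqF.
  by rewrite divr_ge0 ?subr_ge0 // mulr_ge0 // ltW.
lra.
Qed.

Lemma F1_bound : F R d 1 <= 8 * d%:R * ln d%:R.
Proof.
set D : R := d%:R.
have h1 : F R d 1 <= \sum_(1 <= l < d)
    (2 * D * (l%:R)^-1 + 2 * D * ((d - l)%:R)^-1).
  rewrite /F; apply: ler_sum_nat => l /andP[l1 ld].
  have a0 : (0 : R) < l%:R by rewrite ltr0n.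
  have b0 : (0 : R) < (d - l)%:R by rewrite ltr0n subn_gt0.
  have hw : wy R d l <= wx R d l.
    rewrite /wy /wx ler_wpM2l // lef_pV2 ?posrE ?ltr0n ?muln_gt0 ?subn_gt0 ?ld ?l1 //.
    by rewrite ler_nat leq_mul.
  have ex : wx R d l = D * (l%:R)^-1 + D * ((d - l)%:R)^-1.
    rewrite /wx /D natrM natrM.
    have -> : (d%:R : R) = l%:R + (d - l)%:R by rewrite -natrD subnKC // ltnW.
    by field; rewrite !gt_eqF.
  rewrite ex in hw *; lra.
have h2 : \sum_(1 <= l < d) ((d - l)%:R : R)^-1 = \sum_(1 <= l < d) (l%:R)^-1.
  rewrite big_nat_rev; apply: eq_big_nat => i /andP[i1 id].
  by rewrite add1n subSS subKn // ltnW.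
have h3 : \sum_(1 <= l < d) (l%:R : R)^-1 <= 2 * ln D.
  apply: le_trans (_ : _ <= \sum_(1 <= l < d) 2 * (ln l.+1%:R - ln l%:R)) _.
    by apply: ler_sum_nat => l /andP[l1 _]; apply: inv_le_ln.
  by rewrite -mulr_sumr telescope_sumr // mulr1n ln1 subr0.
rewrite big_split /= -!mulr_sumr h2 in h1.
have hD : 0 <= D by rewrite /D ler0n.
have h4 : 4 * D * \sum_(1 <= l < d) (l%:R : R)^-1 <= 4 * D * (2 * ln D).
  by rewrite ler_wpM2l // mulr_ge0.
lra.
Qed.

End Bound.

Section Count.
Variable (R : realType) (d : nat).
Hypothesis d_gt0 : (0 < d)%N.
Local Notation T := (grid d).
Local Notation m := (#|T|%:R : R).

Definition join n (x : T) (f : {ffun 'I_n -> T}) : {ffun 'I_n.+1 -> T} :=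
  [ffun i => if unlift ord0 i is Some j then f j else x].

Lemma ffun_split n (h : {ffun 'I_n.+1 -> T} -> R) :
  \sum_w h w = \sum_x \sum_(f : {ffun 'I_n -> T}) h (join x f).
Proof.
rewrite pair_big /=.
rewrite (reindex (fun p : T * {ffun 'I_n -> T} => join p.1 p.2)) //=.
exists (fun w => (w ord0, [ffun j => w (lift ord0 j)])) => [[x f] _ | w _] /=.
  congr pair; first by rewrite /join ffunE unlift_none.
  by apply/ffunP => j; rewrite !ffunE liftK.
by apply/ffunP => i; rewrite !ffunE; case: unliftP => [j ->|->]; rewrite ?ffunE.
Qed.

Lemma map_join n x (f : {ffun 'I_n -> T}) :
  [seq (join x f) i | i <- enum 'I_n.+1] = x :: [seq f i | i <- enum 'I_n].
Proof.
rewrite enum_ordSl /= ffunE unlift_none -map_comp; congr (_ :: _).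
by apply: eq_map => i /=; rewrite ffunE liftK.
Qed.

Lemma count_Q n (st : state d) :
  \sum_(w : {ffun 'I_n -> T}) nt R (foldl (@step d) st [seq w i | i <- enum 'I_n])
  = m ^+ n * Q R n st.
Proof.
elim: n st => [|n IH] st.
  rewrite enum_ord0 /= sumr_const card_ffun card_ord expn0 expr0 mul1r.
  by [].
rewrite ffun_split.
under eq_bigr do under eq_bigr do rewrite map_join /=.
under eq_bigr do rewrite IH.
rewrite -mulr_sumr QS exprS.
by field; apply: m_neq0.
Qed.

Lemma pot_init (x : T) : pot R (init_state x) = F R d 1.
Proof. by rewrite /pot /init_state /Sx imset_set1 cards1. Qed.

Lemma nt_bound n :
  \sum_(w : {ffun 'I_n.+1 -> T}) nt R (run [seq w i | i <- enum 'I_n.+1])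
  <= m ^+ n.+1 * (F R d 1 / n.+1%:R).
Proof.
rewrite ffun_split.
under eq_bigr do under eq_bigr do rewrite map_join /=.
under eq_bigr do rewrite count_Q.
have hn : (0 : R) < n.+1%:R by rewrite ltr0n.
apply: le_trans (_ : _ <= \sum_(x : T) m ^+ n * (F R d 1 / n.+1%:R)) _.
  apply: ler_sum => x _; apply: ler_wpM2l; first by rewrite exprn_ge0 // ltW // m_gt0.
  rewrite ler_pdivlMr // mulrC -(pot_init x); apply: Q_markov => //.
  exact: Inv_init.
by rewrite sumr_const -[_ *+ #|_|]mulr_natl exprS mulrA.
Qed.

End Count.

Unset Implicit Arguments.
Set Strict Implicit.

Theorem theorem5 (R : realType) (d N : nat) (c : R) :
  (0 < d)%N -> 0 < c ->
  8 * c * d%:R * ln (d%:R) < N%:R ->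
  1 - c^-1 <=
    unif_prob R (fun w : {ffun 'I_N -> grid d} =>
                   forall z : grid d, DAff R (final_B w) z).
Proof.
move=> hd hc hN.
case: N hN => [|n] hN.
  have h0 : 0 <= 8 * c * d%:R * ln (d%:R : R).
    by rewrite !mulr_ge0 ?ln_ge0 ?ler1n // ltW.
  by have := le_lt_trans h0 hN; rewrite ltxx.
set E := [set w : {ffun 'I_n.+1 -> grid d} | `[< forall z, DAff R (final_B w) z >]].
set X := \sum_(w : {ffun 'I_n.+1 -> grid d}) nt R (run [seq w i | i <- enum 'I_n.+1]).
set M : R := #|{: {ffun 'I_n.+1 -> grid d}}|%:R.
have hM : M = (#|grid d|%:R : R) ^+ n.+1 by rewrite /M card_ffun card_ord natrX.
have M0 : 0 < M by rewrite hM exprn_gt0 // m_gt0.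
have hX : X <= M * (F R d 1 / n.+1%:R) by rewrite hM; apply: nt_bound.
have hE : M <= #|E|%:R + X.
  rewrite /M -sum_ind /X -big_split /= -sumr_const.
  apply: ler_sum => w _.
  rewrite /nt; case: eqP => [hT|_] /=; last first.
    by rewrite lerDr; case: (w \in E).
  rewrite addr0 inE; have -> // : `[< forall z, DAff R (final_B w) z >].
  apply/asboolP => z.
  have hI : Inv R (run [seq w i | i <- enum 'I_n.+1]).
    by rewrite enum_ordSl /=; apply: Inv_foldl; apply: Inv_init.
  rewrite /final_B; move: hI hT.
  case: (run _) => [[Sc B] f] [A [Y [_ _ _ hD]]] /= hT.
  by apply: hD; rewrite hT inE.
have hF : F R d 1 / n.+1%:R <= c^-1.
  rewrite ler_pdivrMr ?ltr0n // ler_pdivlMl //.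
  apply: le_trans (ltW hN).
  have -> : 8 * c * d%:R * ln (d%:R : R) = c * (8 * d%:R * ln d%:R) by ring.
  by rewrite ler_pM2l // F1_bound.
rewrite /unif_prob -/E -/M ler_pdivlMr //.
have : M * (F R d 1 / n.+1%:R) <= M * c^-1 by rewrite ler_wpM2l // ltW.
move=> h.
rewrite mulrBl mul1r (mulrC c^-1).
have hX' : X <= M / c by apply: le_trans hX h.
rewrite lerBlDr; apply: le_trans hE _.
by rewrite lerD2l.
Qed.
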